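(* Let $\mathbb{F}$ be a field, $\mathbb{F}(T)$ the field of rational functions in $T$, and $H=\{h\in\mathbb{F}(T)\mid h \text{ is defined at } 1 \text{ and } h(1)=1\}$. Let $G$ be the set of matrices $\begin{pmatrix}1&f\\0&h\end{pmatrix}$ with $f\in\mathbb{F}(T)$, $h\in H$. Then $G$ is a group under matrix multiplication, the center of $G$ is trivial (so $G$ is not nilpotent), and $[e]_g$ is a subgroup of $G$ for every $g\in G$.
   Context: For $g\in G$, $[e]_g=\{[x,g]\mid x\in G\}$ with $[x,y]=x^{-1}y^{-1}xy$; this is the twisted conjugacy class of the unit element for the inner automorphism $x\mapsto g^{-1}xg$. *)

(* Defs.v *)
From HB Require Import structures.
From mathcomp Require Import all_boot all_order all_algebra.
Set Implicit Arguments. Unset Strict Implicit. Unset Printing Implicit Defensive.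
Import GRing.Theory.
Local Open Scope ring_scope.

Definition ratfun (F : fieldType) := {fraction {poly F}}.

Definition polyF (F : fieldType) (p : {poly F}) : ratfun F :=
  @FracField.tofrac _ p.

(* h is defined at 1 with h(1) = 1: h = p/q with q(1) <> 0 and p(1)/q(1) = 1. *)
Definition inH (F : fieldType) (h : ratfun F) : Prop :=
  exists p q : {poly F}, q.[1] != 0 /\ p.[1] = q.[1] /\ h = polyF p / polyF q.

Definition mkG (F : fieldType) (f h : ratfun F) : 'M[ratfun F]_2 :=
  \matrix_(i < 2, j < 2)
     if i == 0 :> nat then (if j == 0 :> nat then 1 else f)
     else (if j == 0 :> nat then 0 else h).

Definition inG (F : fieldType) (A : 'M[ratfun F]_2) : Prop :=
  exists f h, inH h /\ A = mkG f h.

Definition commr (F : fieldType) (x y : 'M[ratfun F]_2) : 'M[ratfun F]_2 :=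
  x^-1 * y^-1 * x * y.

(* [e]_g = { [x, g] | x in G }. *)
Definition twclass (F : fieldType) (g : 'M[ratfun F]_2) (y : 'M[ratfun F]_2) : Prop :=
  exists x, inG x /\ y = commr x g.

(* Main.v *)
Require Import Defs.
From HB Require Import structures.
From mathcomp Require Import all_boot all_order all_algebra ring.
Import GRing.Theory.
Local Open Scope ring_scope.

Lemma fld1 (K : fieldType) (x y z t : K) : y != 0 -> t != 0 ->
  x / y + z / t - 1 = (x * t + z * y - y * t) / (y * t).
Proof.
move=> y0 t0; rewrite addf_div // mulrBl divff //; exact: mulf_neq0.
Qed.

Lemma fld2 (K : fieldType) (x y : K) : y != 0 -> 1 + 1 - x / y = (y + y - x) / y.
Proof. by move=> y0; rewrite !mulrBl mulrDl divff. Qed.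

Lemma fld3 (K : fieldType) (a k b m : K) : k != 0 -> m != 0 ->
  (b + (a + (- b / m + - a / k / m) * k) * m = a * (m - 1) + b * (1 - k)) /\
  (k^-1 / m * k * m = 1).
Proof.
move=> k0 m0; split.
  have -> : b + (a + (- b / m + - a / k / m) * k) * m =
     b + a * m - b * k * (m^-1 * m) - a * ((k^-1 * k) * (m^-1 * m)) by ring.
  rewrite !mulVf //; ring.
have -> : k^-1 / m * k * m = (k^-1 * k) * (m^-1 * m) by ring.
by rewrite !mulVf // mulr1.
Qed.

Section S.
Variable F : fieldType.
Implicit Types f h : ratfun F.

Lemma mkG_mul f h f' h' : mkG f h * mkG f' h' = mkG (f' + f * h') (h * h').
Proof.
apply/matrixP => i j; rewrite !mxE big_ord_recl big_ord1 !mxE /=.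
case: i => [[|[|//]] Hi] /=; case: j => [[|[|//]] Hj] /=;
  rewrite ?mulr0 ?mul0r ?mulr1 ?mul1r ?addr0 ?add0r //.
Qed.

Lemma mkG1 : mkG 0 1 = 1 :> 'M[ratfun F]_2.
Proof.
apply/matrixP => i j; rewrite !mxE.
by case: i => [[|[|//]] Hi] /=; case: j => [[|[|//]] Hj].
Qed.

Lemma mkG_inj f h f' h' : mkG f h = mkG f' h' -> f = f' /\ h = h'.
Proof.
move/matrixP => E; split.
  by have := E 0 1; rewrite !mxE.
by have := E 1 1; rewrite !mxE.
Qed.

Lemma mkG_unit f h : h != 0 ->
  mkG f h \is a GRing.unit /\ (mkG f h)^-1 = mkG (- f * h^-1) h^-1.
Proof.
move=> h0.
have e1 : mkG f h * mkG (- f * h^-1) h^-1 = 1.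
  by rewrite mkG_mul mulNr mulrC addNr divff // mkG1.
have e2 : mkG (- f * h^-1) h^-1 * mkG f h = 1.
  by rewrite mkG_mul mulVf // -mulrA mulVf // mulr1 addrN mkG1.
have U : mkG f h \is a GRing.unit by apply/GRing.unitrP; eexists; split; eauto.
split => //.
by rewrite -[RHS](mulKr U) e1 mulr1.
Qed.

Lemma polyF_eq0 (p : {poly F}) : (polyF p == 0) = (p == 0).
Proof. exact: tofrac_eq0. Qed.

Lemma inH_neq0 h : inH h -> h != 0.
Proof.
case=> p [q [q0 [pq ->]]].
have p0 : p != 0 by apply: contraNneq q0 => p0; rewrite -pq p0 horner0.
have q0' : q != 0 by apply: contraNneq q0 => ->; rewrite horner0.
by rewrite mulf_neq0 // ?invr_eq0 polyF_eq0.
Qed.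

Lemma inH1 : inH (1 : ratfun F).
Proof. by exists 1, 1; rewrite hornerC oner_neq0 /polyF tofrac1 divr1. Qed.

Lemma inHX : inH (polyF 'X : ratfun F).
Proof. by exists 'X, 1; rewrite hornerC hornerX oner_neq0 /polyF tofrac1 divr1. Qed.

Lemma inHM h h' : inH h -> inH h' -> inH (h * h').
Proof.
case=> p [q [q0 [pq ->]]]; case=> p' [q' [q0' [pq' ->]]].
exists (p * p'), (q * q'); rewrite !hornerM mulf_neq0 // pq pq'; split => //; split => //.
by rewrite /polyF !tofracM mulf_div.
Qed.

Lemma inHV h : inH h -> inH h^-1.
Proof.
case=> p [q [q0 [pq ->]]].
by exists q, p; rewrite pq q0 invf_div.
Qed.

Lemma polyF_neq0 {q : {poly F}} : q.[1] != 0 -> polyF q != 0.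
Proof. by move=> q0; rewrite polyF_eq0; apply: contraNneq q0 => ->; rewrite horner0. Qed.

Lemma polyF1 : polyF (1 : {poly F}) = 1.
Proof. exact: tofrac1. Qed.
Lemma polyFD (p q : {poly F}) : polyF (p + q) = polyF p + polyF q.
Proof. exact: tofracD. Qed.
Lemma polyFB (p q : {poly F}) : polyF (p - q) = polyF p - polyF q.
Proof. exact: tofracB. Qed.
Lemma polyFM (p q : {poly F}) : polyF (p * q) = polyF p * polyF q.
Proof. exact: tofracM. Qed.

Lemma inHD h h' : inH h -> inH h' -> inH (h + h' - 1).
Proof.
case=> p [q [q0 [pq ->]]]; case=> p' [q' [q0' [pq' ->]]].
exists (p * q' + p' * q - q * q'), (q * q').
rewrite !(hornerD, hornerN, hornerM) mulf_neq0 // pq pq'; split => //; split.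
  by rewrite [q'.[1] * _]mulrC addrK.
have Q := polyF_neq0 q0; have Q' := polyF_neq0 q0'.
rewrite polyFB polyFD !polyFM.
exact: (@fld1 {fraction {poly F}} _ _ _ _ Q Q').
Qed.

Lemma inHN h : inH h -> inH (1 + 1 - h).
Proof.
case=> p [q [q0 [pq ->]]].
exists (q + q - p), q.
rewrite !(hornerD, hornerN) pq addrK; split => //; split => //.
have Q := polyF_neq0 q0.
rewrite polyFB polyFD; exact: (@fld2 {fraction {poly F}} _ _ Q).
Qed.

Lemma commr_mkG (a k b m : ratfun F) : k != 0 -> m != 0 ->
  commr (mkG a k) (mkG b m) = mkG (a * (m - 1) + b * (1 - k)) 1.
Proof.
move=> k0 m0; rewrite /commr.
have [_ ->] := mkG_unit a k k0; have [_ ->] := mkG_unit b m m0.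
rewrite !mkG_mul.
have [-> ->] := @fld3 {fraction {poly F}} a k b m k0 m0.
by [].
Qed.
End S.
Arguments mkG_mul {F}. Arguments mkG_inj {F f h f' h'}. Arguments mkG_unit {F}. Arguments inH_neq0 {F h}.
Arguments inHM {F h h'}. Arguments inHV {F h}. Arguments inHD {F h h'}. Arguments inHN {F h}. Arguments commr_mkG {F}.
Arguments polyF_eq0 {F}. Arguments polyFB {F}. Arguments mkG1 {F}.

Theorem mainTheorem16 (F : fieldType) :
  (* G is a group under matrix multiplication *)
  [/\ inG (1 : 'M[ratfun F]_2),
      (forall A B : 'M[ratfun F]_2, inG A -> inG B -> inG (A * B)) &
      (forall A : 'M[ratfun F]_2, inG A -> A \is a GRing.unit /\ inG A^-1)] /\
  (* the center of G is trivial *)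
  (forall Z : 'M[ratfun F]_2, inG Z ->
     (forall X, inG X -> Z * X = X * Z) -> Z = 1) /\
  (* [e]_g is a subgroup of G for every g in G *)
  (forall g : 'M[ratfun F]_2, inG g ->
     [/\ (forall y, twclass g y -> inG y),
         twclass g 1,
         (forall y z, twclass g y -> twclass g z -> twclass g (y * z)) &
         (forall y, twclass g y -> twclass g y^-1)]).
Proof.
split; [split|split].
- exists 0, 1; split; [exact: inH1 | by rewrite mkG1].
- move=> A B [f [h [Hh ->]]] [f' [h' [Hh' ->]]].
  exists (f' + f * h'), (h * h'); split; [exact: inHM | exact: mkG_mul].
- move=> A [f [h [Hh ->]]].
  have [U ->] := mkG_unit f h (inH_neq0 Hh).
  split; [exact: U|]. exists (- f * h^-1), h^-1; split; [exact: inHV | by []].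
- move=> Z [f [h [Hh ->]]] C.
  have C1 := C (mkG 1 1) (ex_intro _ 1 (ex_intro _ 1 (conj (inH1 F) erefl))).
  rewrite !mkG_mul in C1; have [e1 _] := mkG_inj C1.
  have h1 : h = 1.
    have : 1 + f * 1 - f = f + 1 * h - f by rewrite e1.
    by rewrite mulr1 mul1r addrK [f + h]addrC addrK => <-.
  have CX := C (mkG 0 (polyF 'X)) (ex_intro _ 0 (ex_intro _ _ (conj (inHX F) erefl))).
  rewrite !mkG_mul in CX; have [e2 _] := mkG_inj CX.
  have f0 : f = 0.
    have : f * (polyF 'X - 1) = 0.
      by rewrite mulrBr mulr1 -[f * _]add0r e2 mul0r addr0 subrr.
    move/eqP; rewrite mulf_eq0 => /orP [/eqP //|].
    by rewrite -(polyF1 F) -polyFB polyF_eq0 -polyC1 polyXsubC_eq0.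
  by rewrite h1 f0 mkG1.
- move=> g [b [m [Hm ->]]]; have m0 := inH_neq0 Hm; split.
  + move=> y [x [[a [k [Hk ->]]] ->]].
    rewrite (commr_mkG a k b m (inH_neq0 Hk) m0).
    by exists (a * (m - 1) + b * (1 - k)), 1; split; [exact: inH1|].
  + exists 1; split; first by exists 0, 1; split; [exact: inH1 | by rewrite mkG1].
    rewrite -mkG1 (commr_mkG 0 1 b m (oner_neq0 _) m0).
    by rewrite mul0r subrr mulr0 addr0.
  + move=> y z [x [[a [k [Hk ->]]] ->]] [x' [[a' [k' [Hk' ->]]] ->]].
    have k0 := inH_neq0 Hk; have k0' := inH_neq0 Hk'.
    have Hk2 := inHD Hk Hk'.
    exists (mkG (a + a') (k + k' - 1)); split; first by exists (a + a'), (k + k' - 1).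
    rewrite (commr_mkG a k b m k0 m0) (commr_mkG a' k' b m k0' m0).
    rewrite (commr_mkG _ _ b m (inH_neq0 Hk2) m0).
    rewrite mkG_mul mulr1; congr (mkG _ _); ring.
  + move=> y [x [[a [k [Hk ->]]] ->]].
    have k0 := inH_neq0 Hk; have Hk2 := inHN Hk.
    exists (mkG (- a) (1 + 1 - k)); split; first by exists (- a), (1 + 1 - k).
    rewrite (commr_mkG a k b m k0 m0) (commr_mkG _ _ b m (inH_neq0 Hk2) m0).
    have [_ ->] := mkG_unit (a * (m - 1) + b * (1 - k)) 1 (oner_neq0 _).
    rewrite invr1 mulr1; congr (mkG _ _); ring.
Qed.
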